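(* In a two-player perfect-information game of depth $D$, let $U_s$ be the exact EPFs and $\{\tilde U_s\}$ learned EPFs with targets $\tilde U'_s$, as in the context. If $L_\infty(\tilde U_s,\tilde U'_s)\le\epsilon$ for all $s\in\mathcal S$, then for every $s\in\mathcal S$, $$\max_{\mu_2\in[\underline V(s),\overline V(s)]}|\tilde U_s(\mu_2)-U_s(\mu_2)|\le\epsilon D.$$
   Context: A two-player perfect-information game is a finite rooted tree with states $\mathcal S$. Its leaves $\mathcal L$ carry payoffs $r_1(\ell),r_2(\ell)$ for the leader $\mathsf P_1$ and the follower $\mathsf P_2$. Non-leaf states are partitioned into leader states $\mathcal S_1$ and follower states $\mathcal S_2$, and $\mathcal C(s)$ denotes the children of $s$. The depth $D$ is the maximum number of edges on a root-to-leaf path. Bounds, defined by backward induction: - $\underline V(\ell)=\overline V(\ell)=r_2(\ell)$ for leaves; - $\underline V(s)=\min_{s'}\underline V(s')$ for $s\in\mathcal S_1$; - $\underline V(s)=\max_{s'}\underline V(s')$ for $s\in\mathcal S_2$; - $\overline V(s)=\max_{s'}\overline V(s')$ for every non-leaf $s$. For $s\in\mathcal S_2$ and $s'\in\mathcal C(s)$, let $\tau(s')=\max_{s^!\in\mathcal C(s),s^!\ne s'}\underline V(s^!)$. Let $\beta(s')=\tau(s')$ if the parent of $s'$ is in $\mathcal S_2$, and $-\infty$ if it is in $\mathcal S_1$. Operators, for $g:\mathbb R\to\mathbb R\cup\{-\infty\}$: - $\bigwedge_i g_i$ is the pointwise infimum of all concave $h\ge\max_i g_i$; - $[g\triangleright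 t](\mu)=g(\mu)$ for $\mu\ge t$ and $-\infty$ otherwise. Exact EPFs: $U_\ell(\mu)=r_1(\ell)$ if $\mu=r_2(\ell)$ and $-\infty$ otherwise; $U_s=\bigwedge_{s'\in\mathcal C(s)}(U_{s'}\triangleright\beta(s'))$. Learned EPFs: $\tilde U_\ell=U_\ell$ for leaves. For non-leaf $s$, $\tilde U_s$ is the piecewise linear interpolation of finitely many points with $x$-coordinates in $[\underline V(s),\overline V(s)]$ including both endpoints. It is real-valued there and $-\infty$ outside. Targets: $\tilde U'_s=\bigwedge_{s'\in\mathcal C(s)}(\tilde U_{s'}\triangleright\beta(s'))$ for non-leaf $s$, and $\tilde U'_\ell=\tilde U_\ell$. The loss is $L_\infty(f,g)=\sup_\mu|f(\mu)-g(\mu)|$, with $|(-\infty)-(-\infty)|=0$. *)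

(* Defs.v *)
From HB Require Import structures.
From mathcomp Require Import all_boot all_order all_algebra.
From mathcomp Require Import boolp classical_sets reals constructive_ereal ereal.

Set Implicit Arguments.
Unset Strict Implicit.
Unset Printing Implicit Defensive.

Import Order.TTheory GRing.Theory Num.Theory.
Local Open Scope ring_scope.
Local Open Scope classical_set_scope.

Section Game.
Variable R : realType.

(** A finite game tree.  [Leaf r1 r2] carries the payoffs of the leader P1
    (r1) and of the follower P2 (r2).  [Node isLeader cs] is a leader state
    (in S1) when [isLeader = true], a follower state (in S2) otherwise, with
    children [cs]. *)
Inductive gtree : Type :=
| Leaf of R & R
| Node of bool & seq gtree.

Definition dummy : gtree := Leaf 0 0.

Fixpoint wf (t : gtree) : bool :=
  match t with
  | Leaf _ _ => true
  | Node _ cs => (size cs != 0)%N && all wf cs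
  end.

Fixpoint depth (t : gtree) : nat :=
  match t with
  | Leaf _ _ => 0%N
  | Node _ cs => (foldr maxn 0%N (map depth cs)).+1
  end.

Definition minl (s : seq R) : R := foldr Num.min (head 0 s) s.
Definition maxl (s : seq R) : R := foldr Num.max (head 0 s) s.

Fixpoint Vlo (t : gtree) : R :=
  match t with
  | Leaf _ r2 => r2
  | Node b cs => if b then minl (map Vlo cs) else maxl (map Vlo cs)
  end.

Fixpoint Vhi (t : gtree) : R :=
  match t with
  | Leaf _ r2 => r2
  | Node _ cs => maxl (map Vhi cs)
  end.

Definition beta (b : bool) (cs : seq gtree) (i : nat) : \bar R :=
  if b then -oo%E
  else (\big[Order.max/-oo%E]_(j <- iota 0 (size cs) | j != i)
          (Vlo (nth dummy cs j))%:E)%E.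

(** concavity of an extended-real valued function (convex hypograph) *)
Definition concave (h : R -> \bar R) : Prop :=
  forall (x y a b t : R), (0 <= t <= 1)%R ->
    (a%:E <= h x)%E -> (b%:E <= h y)%E ->
    ((t * a + (1 - t) * b)%R%:E <= h (t * x + (1 - t) * y)%R)%E.

Definition hull (gs : seq (R -> \bar R)) : R -> \bar R :=
  fun mu => ereal_inf
    [set h mu | h in [set h : R -> \bar R |
        concave h /\ (forall x, h x != +oo%E) /\
        (forall x, (\big[Order.max/-oo%E]_(g <- gs) g x <= h x)%E)]].

Definition restr (g : R -> \bar R) (t : \bar R) : R -> \bar R :=
  fun mu => if (t <= mu%:E)%E then g mu else -oo%E.

Definition Uleaf (r1 r2 : R) : R -> \bar R :=
  fun mu => if mu == r2 then r1%:E else -oo%E.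

Fixpoint U (t : gtree) : R -> \bar R :=
  match t with
  | Leaf r1 r2 => Uleaf r1 r2
  | Node b cs =>
      let us := map U cs in
      hull [seq restr (nth (fun _ => -oo%E) us i) (beta b cs i)
           | i <- iota 0 (size cs)]
  end.

(** states are addressed by paths from the root: [sub t p] is the state
    reached from [t] by following child indices [p]; child [i] of the state
    at address [p] has address [rcons p i]. *)
Fixpoint sub (t : gtree) (p : seq nat) : option gtree :=
  match p with
  | [::] => Some t
  | i :: p' =>
      match t with
      | Leaf _ _ => None
      | Node _ cs => if (i < size cs)%N then sub (nth dummy cs i) p' else None
      end
  end.

Definition pl_interp (a b : R) (f : R -> \bar R) : Prop :=
  exists (xs ys : seq R),
    [/\ sorted <%R xs, head 0 xs = a, last 0 xs = b, (size xs != 0)%N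
      & size ys = size xs] /\
    f a = (head 0 ys)%:E /\
        (forall k mu, (k.+1 < size xs)%N ->
            nth 0 xs k <= mu <= nth 0 xs k.+1 ->
            f mu = (nth 0 ys k + (nth 0 ys k.+1 - nth 0 ys k) *
                      (mu - nth 0 xs k) / (nth 0 xs k.+1 - nth 0 xs k))%R%:E) /\
    (forall mu, ~~ (a <= mu <= b) -> f mu = -oo%E).

Definition learned (t : gtree) (Ut : seq nat -> R -> \bar R) : Prop :=
  forall p s, sub t p = Some s ->
    match s with
    | Leaf r1 r2 => Ut p = Uleaf r1 r2
    | Node _ _ => pl_interp (Vlo s) (Vhi s) (Ut p)
    end.

Definition target (t : gtree) (Ut : seq nat -> R -> \bar R) (p : seq nat)
    : R -> \bar R :=
  match sub t p with
  | Some (Node b cs) =>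
      hull [seq restr (Ut (rcons p i)) (beta b cs i) | i <- iota 0 (size cs)]
  | _ => Ut p
  end.

Definition edist (x y : \bar R) : \bar R :=
  if (x == -oo%E) && (y == -oo%E) then 0%E else `|x - y|%E.

Definition Linf (f g : R -> \bar R) : \bar R :=
  ereal_sup [set edist (f mu) (g mu) | mu in [set: R]].

End Game.

(* Main.v *)
Require Import Defs.
From HB Require Import structures.
From mathcomp Require Import all_boot all_order all_algebra.
From mathcomp Require Import boolp classical_sets reals constructive_ereal ereal.
From mathcomp Require Import lra.
Import Order.TTheory GRing.Theory Num.Theory.
Local Open Scope ring_scope.

Set Implicit Arguments.
Section S.
Variable R : realType.
Local Open Scope ereal_scope.

Definition close (x y : \bar R) (d : R) : Prop :=
  (x = -oo /\ y = -oo) \/ exists a b : R, [/\ x = a%:E, y = b%:E & (`|a - b| <= d)%R].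

Lemma edist_close x y (r : R) : edist x y <= r%:E -> close x y r.
Proof.
rewrite /edist /close; case: x => [a| |]; case: y => [b| |] //=;
  rewrite ?lee_fin; try by auto.
- by move=> h; right; exists a, b.
Qed.

Lemma close_edist x y (r : R) : (0 <= r)%R -> close x y r -> edist x y <= r%:E.
Proof.
move=> r0; case=> [[-> ->]|[a [b [-> -> h]]]].
  by rewrite /edist /= lee_fin.
by rewrite /edist /= lee_fin.
Qed.

Lemma close_sym x y d : close x y d -> close y x d.
Proof. case=> [[-> ->]|[a [b [-> -> h]]]]; [by left|right; exists b, a; split=> //; by rewrite distrC]. Qed.

Lemma close_le x y d : close x y d -> x <= y + d%:E.
Proof.
case=> [[-> ->]|[a [b [-> -> h]]]]; first by rewrite leNye.
rewrite -EFinD lee_fin; have := ler_norm (a - b)%R; lra.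
Qed.

Fixpoint closel (fs gs : seq (R -> \bar R)) (d : R) : Prop :=
  match fs, gs with
  | [::], [::] => True
  | f :: fs', g :: gs' => (forall x, close (f x) (g x) d) /\ closel fs' gs' d
  | _, _ => False
  end.

Lemma closel_sym fs gs d : closel fs gs d -> closel gs fs d.
Proof.
elim: fs gs => [|f fs IH] [|g gs] //= [h1 h2]; split; last exact: IH.
by move=> x; apply: close_sym.
Qed.

Lemma closel_map (T : eqType) (F G : T -> R -> \bar R) (s : seq T) d :
  (forall i, i \in s -> forall x, close (F i x) (G i x) d) ->
  closel [seq F i | i <- s] [seq G i | i <- s] d.
Proof.
elim: s => [|i s IH] //= h; split; first by apply: h; rewrite inE eqxx.
by apply: IH => j js; apply: h; rewrite inE js orbT.
Qed.

Lemma bigmax_closel fs gs d x : closel fs gs d ->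
  \big[Order.max/-oo]_(f <- fs) f x <= \big[Order.max/-oo]_(g <- gs) g x + d%:E.
Proof.
elim: fs gs => [|f fs IH] [|g gs] //=.
  by move=> _; rewrite !big_nil leNye.
move=> [h1 h2]; rewrite !big_cons ge_max; apply/andP; split.
  apply: (le_trans (close_le (h1 x))); apply: leeD2r; by rewrite le_max lexx.
apply: (le_trans (IH _ h2)); apply: leeD2r; by rewrite le_max lexx orbT.
Qed.

Lemma hull_closel fs gs d x : closel fs gs d -> hull fs x <= hull gs x + d%:E.
Proof.
move=> hc; rewrite -leeBlDr //; apply: le_ereal_inf_tmp => _ [h [hcc [hnf hdom]] <-].
rewrite leeBlDr //.
apply: ge_ereal_inf; exists (h x + d%:E) => //.
exists (fun y => h y + d%:E) => //; split; [|split].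
- move=> y z a b tt t01 ha hb.
  have H := hcc y z (a - d)%R (b - d)%R tt t01.
  rewrite !EFinB !leeBlDr // in H; have {H} := H ha hb.
  rewrite -leeBlDr //; apply: le_trans; rewrite -EFinB lee_fin; lra.
- by move=> y; case: (h y) (hnf y).
- move=> y; apply: (le_trans (bigmax_closel _ _ _ y hc)); apply: leeD2r; exact: hdom.
Qed.

Lemma close_mono x y d d' : close x y d -> (d <= d')%R -> close x y d'.
Proof.
case=> [h|[a [b [-> -> h]]]] hd; [by left|right; exists a, b; split=> //].
exact: le_trans hd.
Qed.

Lemma close_comb A B C (e dl : R) : close A B e -> B <= C + dl%:E -> C <= B + dl%:E ->
  close A C (e + dl).
Proof.
case=> [[-> ->]|[a [b [-> -> h]]]] h1 h2.
  by left; split=> //; move: h2; rewrite addNye leeNy_eq => /eqP.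
right; move: h1 h2; case: C => [c| |] //=.
- rewrite -!EFinD !lee_fin => h1 h2; exists a, c; split=> //.
  apply: (le_trans (ler_distD b a c)); apply: lerD => //.
  rewrite ler_norml; apply/andP; split; lra.
Qed.
End S.
Arguments close {R}.
Arguments closel {R}.

Lemma sub_rcons (R : realType) (t : gtree R) p b cs i :
  sub t p = Some (Node b cs) -> (i < size cs)%N ->
  sub t (rcons p i) = Some (nth (dummy R) cs i).
Proof.
elim: p t => [|j p IH] [r1 r2|b' cs'] //=.
- by case=> _ -> ->.
- by case: ifP => // _ h; apply: IH.
Qed.

Lemma depth_nth (R : realType) (cs : seq (gtree R)) i : (i < size cs)%N ->
  (depth (nth (dummy R) cs i) <= foldr maxn 0 (map (@depth R) cs))%N.
Proof.
elim: cs i => [|c cs IH] [|i] //= h.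
  exact: leq_maxl.
exact: ssrnat.leq_trans (IH i h) (leq_maxr _ _).
Qed.

Lemma depth_sub (R : realType) (t : gtree R) p s :
  sub t p = Some s -> (depth s <= depth t)%N.
Proof.
elim: p t => [|j p IH] [r1 r2|b cs] //=.
- by case=> <-.
- by case=> <-.
- case: ifP => // hj h.
  exact: ssrnat.leq_trans (ssrnat.leq_trans (IH _ h) (@depth_nth _ cs j hj)) (leqnSn _).
Qed.

Lemma edist_ge0 (R : realType) (x y : \bar R) : (0 <= edist x y)%E.
Proof. by rewrite /edist; case: ifP => _ //; exact: abse_ge0. Qed.

Lemma main_claim (R : realType) (t : gtree R) (Ut : seq nat -> R -> \bar R)
    (eps : R) : (0 <= eps)%R ->
  learned t Ut ->
  (forall p s, sub t p = Some s -> (Linf (Ut p) (target t Ut p) <= eps%:E)%E) ->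
  forall n p s, (depth s <= n)%N -> sub t p = Some s ->
    forall mu, close (Ut p mu) (U s mu) (eps * (depth s)%:R).
Proof.
move=> e0 hl hL; elim=> [|n IH] p [r1 r2|b cs] //= hd hs mu.
- have := hl _ _ hs => /= ->; rewrite mulr0 /Uleaf; case: ifP => _.
    by right; exists r1, r1; split=> //; rewrite subrr normr0.
  by left.
- have := hl _ _ hs => /= ->; rewrite mulr0 /Uleaf; case: ifP => _.
    by right; exists r1, r1; split=> //; rewrite subrr normr0.
  by left.
- set k := foldr maxn 0 _.
  have hc : closel [seq restr (Ut (rcons p i)) (beta b cs i) | i <- iota 0 (size cs)]
     [seq restr (nth (fun=> -oo%E) [seq U i | i <- cs] i) (beta b cs i) | i <- iota 0 (size cs)]
     (eps * k%:R).
    apply: closel_map => i; rewrite mem_iota add0n => /andP[_ hi] x.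
    rewrite (nth_map (dummy R)) //.
    have hsub := @sub_rcons _ t p b cs i hs hi.
    have hdi := @depth_nth _ cs i hi.
    have := IH _ _ (ssrnat.leq_trans hdi (hd : (k <= n)%N)) hsub x.
    move=> hcl; rewrite /restr; case: ifP => _; last by left.
    apply: (close_mono _ hcl); apply: ler_wpM2l => //; rewrite ler_nat //.
  have hT := hL _ _ hs; rewrite /target hs in hT.
  have hA : (edist (Ut p mu) (hull [seq restr (Ut (rcons p i)) (beta b cs i) | i <- iota 0 (size cs)] mu) <= eps%:E)%E.
    apply: le_trans hT; apply: ereal_sup_ubound; by exists mu.
  have := close_comb _ _ (edist_close _ _ _ _ hA) (hull_closel _ _ _ _ mu hc) (hull_closel _ _ _ _ mu (closel_sym _ _ _ _ hc)).
  by rewrite -[(k.+1)]addn1 natrD mulrDr mulr1 addrC.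
Qed.

Theorem theorem5 (R : realType) (t : gtree R) (Ut : seq nat -> R -> \bar R)
    (eps : R) :
  wf t ->
  learned t Ut ->
  (forall p s, sub t p = Some s -> (Linf (Ut p) (target t Ut p) <= eps%:E)%E) ->
  forall p s, sub t p = Some s ->
    forall mu, Vlo s <= mu <= Vhi s ->
      (edist (Ut p mu) (U s mu) <= (eps * (depth t)%:R)%:E)%E.
Proof.
move=> _ hl hL p s hs mu _.
have e0 : 0 <= eps.
  have h0 := hL [::] t erefl.
  have H1 : (edist (Ut [::] 0%R) (target t Ut [::] 0%R) <= Linf (Ut [::]) (target t Ut [::]))%E.
    by apply: ereal_sup_ubound; exists 0%R.
  rewrite -lee_fin; apply: (le_trans _ (le_trans H1 h0)); exact: edist_ge0.
have hc := @main_claim R t Ut eps e0 hl hL _ p s (leqnn _) hs mu.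
have h1 := close_edist (mulr_ge0 e0 (ler0n _ _)) hc.
apply: (le_trans h1).
by rewrite lee_fin; apply: ler_wpM2l => //; rewrite ler_nat; exact: depth_sub hs.
Qed.
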